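(* Let $J\subset\mathbb{R}\setminus\{0\}$ be compact and $f\in C([0,1])$ (complex valued). Define $\psi:[0,1)\times J\to\mathbb{C}$ by \[ \psi(y,\alpha):=\frac{e^{i\varphi(y,\alpha)}}{1-y}\int_y^1e^{-i\varphi(x,\alpha)}f(x)dx. \] Then $\psi$ extends to a continuous function on $[0,1]\times J$.
   Context: For $\alpha\in\mathbb{R}\setminus\{0\}$ and $y\in(-1,1)$, $\varphi(y,\alpha):=-\frac{2\alpha}{(1-y)^2}+\frac{2\alpha}{1-y}-\frac{2}{\alpha}\log(1-y)$. *)

(* Defs.v *)
From Stdlib Require Import Reals.
From Coquelicot Require Import Coquelicot.
Open Scope R_scope.

Definition phi (y alpha : R) : R :=
  - (2 * alpha) / (1 - y) ^ 2 + (2 * alpha) / (1 - y) - (2 / alpha) * ln (1 - y).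

Definition Cexpi (theta : R) : C := (cos theta, sin theta).

Definition psi (f : R -> C) (y alpha : R) : C :=
  Cmult (Cmult (Cexpi (phi y alpha)) (RtoC (/ (1 - y))))
        (RInt (V := C_R_CompleteNormedModule)
              (fun x => Cmult (Cexpi (- phi x alpha)) (f x)) y 1).

(* Main.v *)
Require Import Defs.
From Stdlib Require Import Reals.
From Coquelicot Require Import Coquelicot.
From Stdlib Require Import Lra Lia.
Open Scope R_scope.


Lemma adapted_ext (f g : R -> R) a b l lf :
  a <= b -> adapted_couple f a b l lf ->
  (forall x, a <= x <= b -> f x = g x) -> adapted_couple g a b l lf.
Proof.
  intros hab [Ho [H0 [H1 [Hl Hc]]]] Hfg.
  repeat split; auto.
  intros i Hi x Hx.
  rewrite Rmin_left in H0 by lra. rewrite Rmax_right in H1 by lra.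
  assert (A : RList.pos_Rl l 0 <= RList.pos_Rl l i).
  { apply (proj1 (RList.RList_P6 l) Ho); lia. }
  assert (B : RList.pos_Rl l (S i) <= RList.pos_Rl l (pred (length l))).
  { apply (proj1 (RList.RList_P6 l) Ho); lia. }
  unfold open_interval in Hx.
  rewrite <- Hfg by lra. apply (Hc i Hi x Hx).
Qed.

Definition glue (c : R) (f1 f2 : R -> R) (t : R) := if Rle_dec t c then f1 t else f2 t.

Lemma glue_step1 a c (s : StepFun a c) f2 : a <= c -> IsStepFun (glue c s f2) a c.
Proof.
  intros hac. exists (subdivision s). exists (subdivision_val s).
  apply adapted_ext with (f := s); auto. apply StepFun_P1.
  intros x Hx. unfold glue. destruct (Rle_dec x c); [auto|lra].
Defined.

Lemma glue_step1_int a c (s : StepFun a c) (f2 : R -> R) (h : a <= c) :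
  RiemannInt_SF (mkStepFun (glue_step1 _ _ s f2 h)) = RiemannInt_SF s.
Proof. reflexivity. Qed.

Lemma glue_step2 c b f1 v : c <= b -> IsStepFun (glue c f1 (fct_cte v)) c b.
Proof.
  intros hcb. exists (cons c (cons b nil)). exists (cons v nil).
  pose proof (StepFun_P3 v hcb) as H.
  destruct H as [Ho [H0 [H1 [Hl Hc]]]]. repeat split; auto.
  intros i Hi x Hx. simpl in Hi. assert (i = 0%nat) by lia. subst i.
  simpl in Hx. unfold open_interval in Hx. simpl. unfold glue, fct_cte.
  destruct (Rle_dec x c); [lra|auto].
Defined.

Lemma glue_step2_int c b (f1 : R -> R) v (h : c <= b) :
  RiemannInt_SF (mkStepFun (glue_step2 _ _ f1 v h)) = v * (b - c).
Proof.
  unfold RiemannInt_SF. simpl. destruct (Rle_dec c b); [|lra]. simpl. ring.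
Qed.

Lemma RI_tail (g : R -> R) a b M : a < b ->
  (forall x, a <= x <= b -> Rabs (g x) <= M) ->
  (forall c, a <= c < b -> Riemann_integrable g a c) ->
  Riemann_integrable g a b.
Proof.
  intros hab HM Hi eps.
  assert (HM0 : 0 <= M) by (specialize (HM a); pose proof (Rabs_pos (g a)); lra).
  set (d := Rmin (eps / (2 * (M + 1))) ((b - a)/2)).
  assert (hd : 0 < d).
  { unfold d. apply Rmin_glb_lt. apply Rdiv_lt_0_compat. destruct eps; simpl; lra. lra. lra. }
  assert (hd2 : d <= (b-a)/2) by apply Rmin_r.
  assert (hd1 : d * (M+1) <= eps / 2).
  { assert (d <= eps / (2 * (M + 1))) by apply Rmin_l.
    apply Rmult_le_compat_r with (r := M+1) in H; [|lra].
    replace (eps / (2 * (M + 1)) * (M + 1)) with (eps/2) in H; [lra|]. field. lra. }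
  set (c := b - d).
  assert (hac : a <= c) by (unfold c; lra).
  assert (hcb : c <= b) by (unfold c; lra).
  assert (he2 : 0 < eps / 2) by (destruct eps; simpl; lra).
  destruct (Hi c ltac:(unfold c; lra) (mkposreal _ he2)) as [phi1 [psi1 [H1 H2]]].
  set (phi := glue c phi1 (fct_cte 0)).
  set (psi := glue c psi1 (fct_cte M)).
  assert (Pphi : IsStepFun phi a b).
  { apply StepFun_P46 with c. apply glue_step1; auto. apply glue_step2; auto. }
  pose (p1 := glue_step1 _ _ psi1 (fct_cte M) hac).
  pose (p2 := glue_step2 _ _ psi1 M hcb).
  assert (Ppsi : IsStepFun psi a b) by (apply StepFun_P46 with c; [exact p1|exact p2]).
  exists (mkStepFun Pphi). exists (mkStepFun Ppsi). split.
  - intros t Ht. rewrite Rmin_left in Ht by lra. rewrite Rmax_right in Ht by lra.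
    simpl. unfold phi, psi, glue.
    destruct (Rle_dec t c).
    + apply H1. rewrite Rmin_left by lra. rewrite Rmax_right by lra. lra.
    + unfold fct_cte. rewrite Rminus_0_r. apply HM. lra.
  - pose proof (StepFun_P43 p1 p2 Ppsi) as E.
    unfold p1, p2 in E. rewrite glue_step1_int, glue_step2_int in E.
    change (Rabs (RiemannInt_SF {| fe := glue c psi1 (fct_cte M); pre := Ppsi |}) < eps). rewrite <- E. simpl in H2.
    assert (0 <= M * (b - c)) by (apply Rmult_le_pos; lra).
    assert (M * (b - c) < eps / 2).
    { unfold c. replace (b - (b - d)) with d by ring. nra. }
    apply Rabs_def1; apply Rabs_def2 in H2; lra.
Qed.

Lemma exR_tail (g : R -> R) a b M : a < b ->
  (forall x, a <= x <= b -> Rabs (g x) <= M) ->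
  (forall c, a <= c < b -> ex_RInt g a c) ->
  ex_RInt g a b.
Proof.
  intros hab HM Hi. apply ex_RInt_Reals_1. apply RI_tail with M; auto.
  intros c Hc. apply ex_RInt_Reals_0. auto.
Qed.

Lemma normC (z : C) : norm (K:=R_AbsRing) (V:=C_R_NormedModule) z = Cmod z.
Proof.
  destruct z as [x y]. unfold Cmod. simpl. unfold prod_norm. simpl.
  unfold norm. simpl. unfold prod_norm. simpl.
  change (sqrt (Rabs x ^ 2 + Rabs y ^ 2) = sqrt (x * (x * 1) + y * (y * 1))).
  rewrite !pow2_abs. reflexivity.
Qed.

Lemma fst_le_Cmod (z : C) : Rabs (fst z) <= Cmod z.
Proof. apply re_le_Cmod. Qed.
Lemma snd_le_Cmod (z : C) : Rabs (snd z) <= Cmod z.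
Proof.
  destruct z as [x y]. unfold Cmod. simpl. rewrite <- sqrt_Rsqr_abs.
  apply sqrt_le_1_alt. unfold Rsqr. nra.
Qed.

Lemma exC_tail (G : R -> C) a b M : a < b ->
  (forall x, a <= x <= b -> Cmod (G x) <= M) ->
  (forall c, a <= c < b -> ex_RInt (V:=C_R_NormedModule) G a c) ->
  ex_RInt (V:=C_R_NormedModule) G a b.
Proof.
  intros hab HM Hi.
  apply (ex_RInt_fct_extend_pair (U:=R_NormedModule) (V:=R_NormedModule)).
  - apply exR_tail with M; auto.
    + intros x Hx. eapply Rle_trans; [apply fst_le_Cmod|auto].
    + intros c Hc. apply (ex_RInt_fct_extend_fst (U:=R_NormedModule) (V:=R_NormedModule)). auto.
  - apply exR_tail with M; auto.
    + intros x Hx. eapply Rle_trans; [apply snd_le_Cmod|auto].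
    + intros c Hc. apply (ex_RInt_fct_extend_snd (U:=R_NormedModule) (V:=R_NormedModule)). auto.
Qed.

Definition clamp (x : R) := Rmax 0 (Rmin x 1).

Lemma clamp_in x : 0 <= clamp x <= 1.
Proof. unfold clamp, Rmax, Rmin. repeat destruct Rle_dec; lra. Qed.
Lemma clamp_id x : 0 <= x <= 1 -> clamp x = x.
Proof. intros. unfold clamp, Rmax, Rmin. repeat destruct Rle_dec; lra. Qed.
Lemma clamp_lip x y : Rabs (clamp x - clamp y) <= Rabs (x - y).
Proof. unfold clamp, Rmax, Rmin. repeat destruct Rle_dec; unfold Rabs; repeat destruct Rcase_abs; lra. Qed.

Lemma ft_cont (f : R -> C) :
  (forall x, 0 <= x <= 1 ->
     filterlim f (within (fun t => 0 <= t <= 1) (locally x)) (locally (f x))) ->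
  forall x, continuous (fun t => f (clamp t)) x.
Proof.
  intros Hf x. unfold continuous.
  eapply filterlim_comp; [|apply (Hf (clamp x) (clamp_in x))].
  intros P HP. destruct HP as [eps HP]. exists eps. intros t Ht. apply HP.
  - change (Rabs (clamp t - clamp x) < eps).
    eapply Rle_lt_trans; [apply clamp_lip|]. exact Ht.
  - apply clamp_in.
Qed.

Lemma cont_fst (g : R -> C) x : continuous g x -> continuous (fun t => fst (g t)) x.
Proof.
  intros H. apply continuous_comp with (f := g) (g := fst); auto.
  rewrite (surjective_pairing (g x)). apply continuous_fst.
Qed.
Lemma cont_snd (g : R -> C) x : continuous g x -> continuous (fun t => snd (g t)) x.
Proof.
  intros H. apply continuous_comp with (f := g) (g := snd); auto.
  rewrite (surjective_pairing (g x)). apply continuous_snd.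
Qed.

Lemma phi_cont a x : x < 1 -> continuous (fun t => phi t a) x.
Proof.
  intros hx. apply (ex_derive_continuous (K:=R_AbsRing) (V:=R_NormedModule)). unfold phi. auto_derive.
  repeat split; try lra; intro; nra.
Qed.

Lemma Cmod_Cexpi u : Cmod (Cexpi u) = 1.
Proof.
  unfold Cexpi, Cmod. simpl. rewrite <- sqrt_1 at 3. f_equal.
  pose proof (sin2_cos2 u). unfold Rsqr in H. lra.
Qed.

Definition KK (a : R) (w : R -> C) (x : R) : C := Cmult (Cexpi (- phi x a)) (w x).

Lemma Cmod_KK a w x : Cmod (KK a w x) = Cmod (w x).
Proof. unfold KK. rewrite Cmod_mult, Cmod_Cexpi. ring. Qed.

Definition Ccont (w : R -> C) := forall x, continuous (fun t => fst (w t)) x /\ continuous (fun t => snd (w t)) x.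

Lemma KK_ex a (w : R -> C) y c : Ccont w -> y <= c < 1 -> ex_RInt (V:=C_R_NormedModule) (KK a w) y c.
Proof.
  intros Hw hyc.
  apply (ex_RInt_fct_extend_pair (U:=R_NormedModule) (V:=R_NormedModule)).
  - apply (ex_RInt_continuous (V:=R_CompleteNormedModule)). intros z Hz.
    rewrite Rmin_left in Hz by lra. rewrite Rmax_right in Hz by lra.
    destruct (Hw z) as [H1 H2].
    assert (Hp : continuous (fun t => phi t a) z) by (apply phi_cont; lra).
    apply continuous_ext with (f := fun t => cos (- phi t a) * fst (w t) - sin (- phi t a) * snd (w t)).
    { intros; reflexivity. }
    apply (continuous_minus (V:=R_NormedModule)); apply (continuous_mult (K:=R_AbsRing)); auto.
    + apply continuous_cos_comp. apply (continuous_opp (V:=R_NormedModule)). auto.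
    + apply continuous_sin_comp. apply (continuous_opp (V:=R_NormedModule)). auto.
  - apply (ex_RInt_continuous (V:=R_CompleteNormedModule)). intros z Hz.
    rewrite Rmin_left in Hz by lra. rewrite Rmax_right in Hz by lra.
    destruct (Hw z) as [H1 H2].
    assert (Hp : continuous (fun t => phi t a) z) by (apply phi_cont; lra).
    apply continuous_ext with (f := fun t => cos (- phi t a) * snd (w t) + sin (- phi t a) * fst (w t)).
    { intros; reflexivity. }
    apply (continuous_plus (V:=R_NormedModule)); apply (continuous_mult (K:=R_AbsRing)); auto.
    + apply continuous_cos_comp. apply (continuous_opp (V:=R_NormedModule)). auto.
    + apply continuous_sin_comp. apply (continuous_opp (V:=R_NormedModule)). auto.
Qed.

Lemma KK_ex1 a (w : R -> C) y M : Ccont w -> (forall x, Cmod (w x) <= M) -> y < 1 ->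
  ex_RInt (V:=C_R_NormedModule) (KK a w) y 1.
Proof.
  intros Hw HM hy. apply exC_tail with M;
    [exact hy| intros x _; rewrite Cmod_KK; auto | intros c Hc; apply KK_ex; auto; lra].
Qed.

Definition ph' a x := -4*a/(1-x)^3 + 2*a/(1-x)^2 + 2/(a*(1-x)).
Definition wf A B a x := A * cos (phi x a) + B * sin (phi x a).
Definition vf A B a x := A * sin (phi x a) - B * cos (phi x a).
Definition uf a x := -(1-x)^3/(4*a).
Definition uf' a x := 3*(1-x)^2/(4*a).
Definition Uf A B a x := uf a x * vf A B a x.
Definition dUf A B a x := uf' a x * vf A B a x + uf a x * (ph' a x * wf A B a x).

Lemma is_derive_eq (f : R -> R) x l l' : is_derive f x l -> l = l' -> is_derive f x l'.
Proof. intros H ->. exact H. Qed.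

Lemma phi_deriv a x : a <> 0 -> x < 1 -> is_derive (fun t => phi t a) x (ph' a x).
Proof.
  intros ha hx. unfold ph', phi. auto_derive.
  - repeat split; try lra; intro; nra.
  - field. split; [lra|auto].
Qed.

Lemma uf_deriv a x : a <> 0 -> is_derive (uf a) x (uf' a x).
Proof.
  intros ha. unfold uf, uf'. auto_derive. auto. field. auto.
Qed.

Lemma Uf_deriv A B a x : a <> 0 -> x < 1 -> is_derive (Uf A B a) x (dUf A B a x).
Proof.
  intros ha hx.
  pose proof (phi_deriv a x ha hx) as Hp.
  pose proof (is_derive_comp sin (fun t => phi t a) x _ _ (is_derive_sin _) Hp) as Hs.
  pose proof (is_derive_comp cos (fun t => phi t a) x _ _ (is_derive_cos _) Hp) as Hc.
  pose proof (is_derive_minus _ _ x _ _ (is_derive_scal _ x A _ Hs) (is_derive_scal _ x B _ Hc)) as Hv.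
  pose proof (is_derive_mult _ _ x _ _ (uf_deriv a x ha) Hv Rmult_comm) as H.
  eapply is_derive_eq.
  - apply is_derive_ext with (2 := H). intros t. reflexivity.
  - unfold dUf, vf, wf. unfold mult, plus, minus, opp, scal; simpl. unfold mult, plus; simpl. ring.
Qed.

Lemma vf_bound A B a x : Rabs (vf A B a x) <= Rabs A + Rabs B.
Proof.
  unfold vf. pose proof (SIN_bound (phi x a)). pose proof (COS_bound (phi x a)).
  eapply Rle_trans; [apply Rabs_triang|]. rewrite Rabs_Ropp, !Rabs_mult.
  assert (Rabs (sin (phi x a)) <= 1) by (apply Rabs_le; lra).
  assert (Rabs (cos (phi x a)) <= 1) by (apply Rabs_le; lra).
  pose proof (Rabs_pos A). pose proof (Rabs_pos B). nra.
Qed.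

Lemma wf_bound A B a x : Rabs (wf A B a x) <= Rabs A + Rabs B.
Proof.
  unfold wf. pose proof (SIN_bound (phi x a)). pose proof (COS_bound (phi x a)).
  eapply Rle_trans; [apply Rabs_triang|]. rewrite !Rabs_mult.
  assert (Rabs (sin (phi x a)) <= 1) by (apply Rabs_le; lra).
  assert (Rabs (cos (phi x a)) <= 1) by (apply Rabs_le; lra).
  pose proof (Rabs_pos A). pose proof (Rabs_pos B). nra.
Qed.

Lemma uf_ph' a x : a <> 0 -> x < 1 -> uf a x * ph' a x = 1 - (1-x)/2 - (1-x)^2/(2*a^2).
Proof. intros ha hx. unfold uf, ph'. field. repeat split; auto; lra. Qed.

Lemma diff_eq A B a x : a <> 0 -> x < 1 ->
  wf A B a x - dUf A B a x = - uf' a x * vf A B a x + ((1-x)/2 + (1-x)^2/(2*a^2)) * wf A B a x.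
Proof.
  intros ha hx. unfold dUf. rewrite <- Rmult_assoc, uf_ph' by auto. ring.
Qed.

Lemma inv_abs_sq a : a <> 0 -> / (a^2) = (/ Rabs a)^2.
Proof. intros ha. rewrite <- (pow2_abs a). field. apply Rabs_no_R0; auto. Qed.

Lemma diff_bound A B a Q y x : a <> 0 -> / Rabs a <= Q -> 0 <= y -> y <= x < 1 ->
  Rabs (wf A B a x - dUf A B a x) <= (Rabs A + Rabs B) * (1 - y) * (3*Q/4 + 1/2 + Q^2/2).
Proof.
  intros ha hQ hy hx. rewrite diff_eq by (auto; lra).
  set (t := 1 - x). set (S := Rabs A + Rabs B). set (q := / Rabs a).
  assert (hq : 0 < q) by (apply Rinv_0_lt_compat, Rabs_pos_lt; auto).
  pose proof (vf_bound A B a x) as Hv. pose proof (wf_bound A B a x) as Hw.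
  fold S in Hv, Hw.
  assert (Hu : Rabs (uf' a x) = 3 * t^2 / 4 * q).
  { unfold uf', q. fold t. rewrite Rabs_div by (intro; apply ha; lra).
    rewrite !Rabs_mult, (Rabs_right 3), (Rabs_right 4), (Rabs_right (t^2)) by (try pose proof (pow2_ge_0 t); lra).
    field. apply Rabs_no_R0; auto. }
  assert (Hc : t / 2 + t ^ 2 / (2 * a ^ 2) = t/2 + t^2/2 * q^2).
  { unfold q. rewrite <- inv_abs_sq by auto. field. auto. }
  rewrite Hc.
  assert (ht : 0 < t <= 1 - y) by (unfold t; lra).
  fold q in hQ. clearbody t S q.
  eapply Rle_trans; [apply Rabs_triang|]. rewrite !Rabs_mult, Rabs_Ropp, Hu.
  rewrite (Rabs_right (t/2 + _)) by (assert (0 <= t^2/2*q^2) by (apply Rmult_le_pos; [|apply pow2_ge_0]; nra); lra).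
  assert (hS : 0 <= S) by (pose proof (Rabs_pos (vf A B a x)); lra).
  assert (h1 : 3 * t ^ 2 / 4 * q * Rabs (vf A B a x) <= 3 * t ^ 2 / 4 * q * S).
  { apply Rmult_le_compat_l; auto. assert (0 <= t^2) by apply pow2_ge_0. nra. }
  assert (h2 : (t / 2 + t ^ 2 / 2 * q ^ 2) * Rabs (wf A B a x) <= (t / 2 + t ^ 2 / 2 * q ^ 2) * S).
  { apply Rmult_le_compat_l; auto. assert (0 <= t^2/2*q^2) by (apply Rmult_le_pos; [|apply pow2_ge_0]; nra). lra. }
  eapply Rle_trans; [apply Rplus_le_compat; [exact h1|exact h2]|].
  assert (t^2 <= t * (1-y)) by (simpl; rewrite Rmult_1_r; apply Rmult_le_compat_l; lra).
  assert (q^2 <= Q^2) by (simpl; rewrite !Rmult_1_r; apply Rmult_le_compat; lra).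
  assert (t * (1-y) <= 1 - y) by nra.
  assert (3 * t ^ 2 / 4 * q <= (1-y) * (3*Q/4)) by nra.
  assert (t ^ 2 / 2 * q ^ 2 <= (1-y) * (Q^2/2)).
  { assert (t^2 * q^2 <= (1-y) * Q^2). { apply Rmult_le_compat; try nra. } lra. }
  assert (0 <= S * (1-y)) by nra.
  nra.
Qed.

Lemma cR_mult (f g : R -> R) x : continuous f x -> continuous g x -> continuous (fun t => f t * g t) x.
Proof. intros. apply (continuous_mult (K:=R_AbsRing)); auto. Qed.
Lemma cR_plus (f g : R -> R) x : continuous f x -> continuous g x -> continuous (fun t => f t + g t) x.
Proof. intros. apply (continuous_plus (V:=R_NormedModule)); auto. Qed.
Lemma cR_minus (f g : R -> R) x : continuous f x -> continuous g x -> continuous (fun t => f t - g t) x.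
Proof. intros. apply (continuous_minus (V:=R_NormedModule)); auto. Qed.
Lemma cR_const (c : R) x : continuous (fun _ : R => c) x.
Proof. apply continuous_const. Qed.

Lemma wf_cont A B a x : x < 1 -> continuous (wf A B a) x.
Proof.
  intros hx. pose proof (phi_cont a x hx). unfold wf.
  apply cR_plus; apply cR_mult; try apply cR_const.
  apply continuous_cos_comp; auto. apply continuous_sin_comp; auto.
Qed.

Lemma vf_cont A B a x : x < 1 -> continuous (vf A B a) x.
Proof.
  intros hx. pose proof (phi_cont a x hx). unfold vf.
  apply cR_minus; apply cR_mult; try apply cR_const.
  apply continuous_sin_comp; auto. apply continuous_cos_comp; auto.
Qed.

Lemma dUf_cont A B a x : a <> 0 -> x < 1 -> continuous (dUf A B a) x.
Proof.
  intros ha hx. unfold dUf.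
  assert (H1 : continuous (uf' a) x).
  { apply (ex_derive_continuous (K:=R_AbsRing) (V:=R_NormedModule)). unfold uf'. auto_derive. auto. }
  assert (H2 : continuous (uf a) x).
  { apply (ex_derive_continuous (K:=R_AbsRing) (V:=R_NormedModule)). unfold uf. auto_derive. auto. }
  assert (H3 : continuous (ph' a) x).
  { apply (ex_derive_continuous (K:=R_AbsRing) (V:=R_NormedModule)). unfold ph'. auto_derive.
    repeat split; repeat apply Rmult_integral_contrapositive_currified; auto; lra. }
  apply cR_plus; apply cR_mult; auto. apply vf_cont; auto. apply cR_mult; auto. apply wf_cont; auto.
Qed.

Definition KQ Q := 2*Q + 1 + Q^2.

Lemma OSC_c A B a Q y c : a <> 0 -> / Rabs a <= Q -> 0 <= y -> y <= c < 1 ->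
  Rabs (RInt (wf A B a) y c) <= (Rabs A + Rabs B) * (1-y)^2 * KQ Q.
Proof.
  intros ha hQ hy hc.
  set (S := Rabs A + Rabs B).
  assert (hq : 0 < / Rabs a) by (apply Rinv_0_lt_compat, Rabs_pos_lt; auto).
  assert (HU : is_RInt (dUf A B a) y c (minus (Uf A B a c) (Uf A B a y))).
  { apply (is_RInt_derive (V:=R_CompleteNormedModule)).
    - intros x Hx. rewrite Rmin_left in Hx by lra. rewrite Rmax_right in Hx by lra.
      apply Uf_deriv; auto; lra.
    - intros x Hx. rewrite Rmin_left in Hx by lra. rewrite Rmax_right in Hx by lra.
      apply dUf_cont; auto; lra. }
  assert (HW : ex_RInt (wf A B a) y c).
  { apply (ex_RInt_continuous (V:=R_CompleteNormedModule)). intros x Hx.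
    rewrite Rmin_left in Hx by lra. rewrite Rmax_right in Hx by lra. apply wf_cont; lra. }
  pose proof (is_RInt_minus _ _ _ _ _ _ (RInt_correct _ _ _ HW) HU) as HD.
  assert (HB : norm (minus (RInt (wf A B a) y c) (minus (Uf A B a c) (Uf A B a y))) <=
     (c - y) * ((Rabs A + Rabs B) * (1 - y) * (3*Q/4 + 1/2 + Q^2/2))).
  { apply (norm_RInt_le_const (V:=R_NormedModule) (fun t => minus (wf A B a t) (dUf A B a t))); [lra| |exact HD].
    intros x Hx. exact (diff_bound A B a Q y x ha hQ hy (conj (proj1 Hx) (Rle_lt_trans _ _ _ (proj2 Hx) (proj2 hc)))). }
  change (norm ?z) with (Rabs z) in HB. unfold minus, plus, opp in HB; simpl in HB.
  unfold plus, opp in HB; simpl in HB. unfold minus, plus, opp; simpl.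
  assert (HUb : Rabs (Uf A B a c - Uf A B a y) <= S * (1-y)^2 * (Q/2)).
  { unfold Uf. 
    assert (Hu : forall x, y <= x < 1 -> Rabs (uf a x) <= (1-y)^2 * (Q/4)).
    { intros x Hx. unfold uf. rewrite Rabs_div by (intro; apply ha; lra).
      rewrite Rabs_Ropp, Rabs_mult, (Rabs_right 4) by lra.
      rewrite (Rabs_right ((1-x)^3)) by (apply Rle_ge; apply pow_le; lra).
      replace ((1-x)^3/(4*Rabs a)) with ((1-x)^3 * /Rabs a / 4) by (field; apply Rabs_no_R0; auto).
      assert ((1-x)^3 <= (1-y)^2).
      { assert (0 <= 1-x <= 1-y) by lra. assert (1 - y <= 1) by lra.
        assert (h1 : (1-x)*(1-x) <= (1-y)*(1-y)) by (apply Rmult_le_compat; lra).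
        assert (h2 : 0 <= (1-x)*(1-x)) by nra.
        assert (h3 : (1-x)*(1-x)*(1-x) <= (1-x)*(1-x)*1) by (apply Rmult_le_compat_l; lra).
        simpl. lra. }
      assert (0 <= (1-x)^3) by (apply pow_le; lra).
      assert ((1-x)^3 * /Rabs a <= (1-y)^2 * Q) by (apply Rmult_le_compat; lra).
      lra. }
    eapply Rle_trans; [apply Rabs_triang|]. rewrite Rabs_Ropp, !Rabs_mult.
    pose proof (Hu c ltac:(lra)). pose proof (Hu y ltac:(lra)).
    pose proof (vf_bound A B a c). pose proof (vf_bound A B a y).
    fold S in H1, H2.
    pose proof (Rabs_pos (uf a c)). pose proof (Rabs_pos (uf a y)). pose proof (Rabs_pos (vf A B a c)).
    pose proof (Rabs_pos (vf A B a y)).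
    assert (Rabs (uf a c) * Rabs (vf A B a c) <= (1 - y) ^ 2 * (Q / 4) * S) by (apply Rmult_le_compat; auto).
    assert (Rabs (uf a y) * Rabs (vf A B a y) <= (1 - y) ^ 2 * (Q / 4) * S) by (apply Rmult_le_compat; auto).
    lra. }
  set (I := RInt (wf A B a) y c) in *.
  set (D := Uf A B a c + - Uf A B a y) in *.
  replace I with ((I + - D) + D) by ring.
  eapply Rle_trans; [apply Rabs_triang|].
  unfold KQ. fold S in HB.
  assert (0 <= S) by (unfold S; pose proof (Rabs_pos A); pose proof (Rabs_pos B); lra).
  assert (0 <= Q) by lra.
  assert ((c - y) <= 1 - y) by lra.
  assert (0 <= S * (1 - y) * (3 * Q / 4 + 1 / 2 + Q ^ 2 / 2)).
  { apply Rmult_le_pos. nra. assert (0 <= Q^2) by apply pow2_ge_0. lra. }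
  assert ((c - y) * (S * (1 - y) * (3 * Q / 4 + 1 / 2 + Q ^ 2 / 2)) <= (1-y) * (S * (1 - y) * (3 * Q / 4 + 1 / 2 + Q ^ 2 / 2)))
    by (apply Rmult_le_compat_r; lra).
  assert (0 <= S * (1-y)^2) by (apply Rmult_le_pos; [lra|apply pow2_ge_0]).
  assert (0 <= Q^2) by apply pow2_ge_0.
  replace ((1 - y) * (S * (1 - y) * (3 * Q / 4 + 1 / 2 + Q ^ 2 / 2))) with (S * (1-y)^2 * (3 * Q / 4 + 1 / 2 + Q ^ 2 / 2)) in H3 by ring.
  assert (S * (1-y)^2 * (3 * Q / 4 + 1 / 2 + Q ^ 2 / 2) + S * (1-y)^2 * (Q/2) <= S * (1 - y) ^ 2 * (2 * Q + 1 + Q ^ 2)).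
  { rewrite <- Rmult_plus_distr_l. apply Rmult_le_compat_l; lra. }
  replace (Q * (Q * 1)) with (Q^2) in HB by ring.
  replace (S * ((1 - y) * ((1 - y) * 1))) with (S * (1-y)^2) by ring.
  assert (Rabs D <= S * (1 - y) ^ 2 * (Q / 2)) by (unfold D; exact HUb).
  lra.
Qed.

Lemma wf_ex A B a y : y < 1 -> ex_RInt (wf A B a) y 1.
Proof.
  intros hy. apply exR_tail with (Rabs A + Rabs B); auto.
  - intros x _. apply wf_bound.
  - intros c Hc. apply (ex_RInt_continuous (V:=R_CompleteNormedModule)). intros x Hx.
    rewrite Rmin_left in Hx by lra. rewrite Rmax_right in Hx by lra. apply wf_cont; lra.
Qed.

Lemma OSC_1 A B a Q y : a <> 0 -> / Rabs a <= Q -> 0 <= y < 1 ->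
  Rabs (RInt (wf A B a) y 1) <= (Rabs A + Rabs B) * (1-y)^2 * KQ Q.
Proof.
  intros ha hQ hy.
  set (S := Rabs A + Rabs B).
  assert (HS : 0 <= S) by (unfold S; pose proof (Rabs_pos A); pose proof (Rabs_pos B); lra).
  apply Rle_plus_epsilon. intros e he.
  set (d := Rmin ((1-y)/2) (e / (S+1))).
  assert (hd : 0 < d) by (apply Rmin_glb_lt; [lra| apply Rdiv_lt_0_compat; lra]).
  assert (hd1 : d <= (1-y)/2) by apply Rmin_l.
  assert (hd2 : d <= e/(S+1)) by apply Rmin_r.
  set (c := 1 - d).
  assert (E : RInt (wf A B a) y 1 = RInt (wf A B a) y c + RInt (wf A B a) c 1).
  { symmetry. apply (RInt_Chasles (V:=R_CompleteNormedModule)).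
    apply (ex_RInt_Chasles_1 (V:=R_CompleteNormedModule)) with 1. unfold c; lra. apply wf_ex; lra.
    apply wf_ex. unfold c; lra. }
  rewrite E.
  pose proof (OSC_c A B a Q y c ha hQ (proj1 hy) ltac:(unfold c; lra)) as H1.
  assert (H2 : Rabs (RInt (wf A B a) c 1) <= (1 - c) * S).
  { apply (norm_RInt_le_const (V:=R_NormedModule) (wf A B a)).
    unfold c; lra. intros x _. apply wf_bound.
    apply (RInt_correct (V:=R_CompleteNormedModule)). apply wf_ex. unfold c; lra. }
  assert ((1 - c) * S <= e).
  { unfold c. replace (1 - (1 - d)) with d by ring.
    assert (d * (S+1) <= e).
    { apply Rmult_le_compat_r with (r := S+1) in hd2; [|lra].
      replace (e / (S + 1) * (S + 1)) with e in hd2 by (field; lra). lra. }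
    nra. }
  eapply Rle_trans; [apply Rabs_triang|]. fold S in H1. lra.
Qed.

Lemma Cmod_le_sum (z : C) : Cmod z <= Rabs (fst z) + Rabs (snd z).
Proof.
  destruct z as [x y]. unfold Cmod. simpl.
  rewrite <- (sqrt_Rsqr (Rabs x + Rabs y)) by (pose proof (Rabs_pos x); pose proof (Rabs_pos y); lra).
  apply sqrt_le_1_alt. unfold Rsqr.
  pose proof (Rabs_pos x); pose proof (Rabs_pos y).
  assert (x * x = Rabs x * Rabs x) by (rewrite <- Rabs_mult; rewrite Rabs_right; [ring|]; apply Rle_ge; nra).
  assert (y * y = Rabs y * Rabs y) by (rewrite <- Rabs_mult; rewrite Rabs_right; [ring|]; apply Rle_ge; nra).
  nra.
Qed.

Lemma cos_lip u v : Rabs (cos u - cos v) <= Rabs (u - v).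
Proof.
  destruct (MVT_abs cos (fun x => - sin x) v u) as [c [Hc _]].
  { intros c _. apply derivable_pt_lim_cos. }
  rewrite Hc. rewrite Rabs_Ropp. pose proof (SIN_bound c).
  assert (Rabs (sin c) <= 1) by (apply Rabs_le; lra).
  pose proof (Rabs_pos (u - v)). nra.
Qed.
Lemma sin_lip u v : Rabs (sin u - sin v) <= Rabs (u - v).
Proof.
  destruct (MVT_abs sin cos v u) as [c [Hc _]].
  { intros c _. apply derivable_pt_lim_sin. }
  rewrite Hc. pose proof (COS_bound c).
  assert (Rabs (cos c) <= 1) by (apply Rabs_le; lra).
  pose proof (Rabs_pos (u - v)). nra.
Qed.

Lemma Cexpi_lip u v : Cmod (Cminus (Cexpi u) (Cexpi v)) <= 2 * Rabs (u - v).
Proof.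
  eapply Rle_trans; [apply Cmod_le_sum|]. simpl.
  pose proof (cos_lip u v). pose proof (sin_lip u v). unfold Rminus in *. lra.
Qed.

Lemma cont_eps (g : R -> R) x : continuous g x ->
  forall e, 0 < e -> exists d, 0 < d /\ forall y, Rabs (y - x) < d -> Rabs (g y - g x) < e.
Proof.
  intros H e he. destruct (proj1 (filterlim_locally g (g x)) H (mkposreal e he)) as [d Hd].
  exists d. split. apply cond_pos. intros y Hy. apply (Hd y Hy).
Qed.

Lemma contC_eps (g : R -> C) x : Ccont g ->
  forall e, 0 < e -> exists d, 0 < d /\ forall y, Rabs (y - x) < d -> Cmod (Cminus (g y) (g x)) < e.
Proof.
  intros H e he.
  destruct (H x) as [H1 H2].
  destruct (cont_eps _ _ H1 (e/2) ltac:(lra)) as [d1 [hd1 Hd1]].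
  destruct (cont_eps _ _ H2 (e/2) ltac:(lra)) as [d2 [hd2 Hd2]].
  exists (Rmin d1 d2). split. apply Rmin_glb_lt; auto.
  intros y Hy. eapply Rle_lt_trans; [apply Cmod_le_sum|]. simpl.
  pose proof (Hd1 y (Rlt_le_trans _ _ _ Hy (Rmin_l _ _))).
  pose proof (Hd2 y (Rlt_le_trans _ _ _ Hy (Rmin_r _ _))). unfold Rminus in *. lra.
Qed.

Lemma RInt_C_fst (G : R -> C) a b : ex_RInt (V:=C_R_NormedModule) G a b ->
  fst (RInt (V:=C_R_CompleteNormedModule) G a b) = RInt (fun x => fst (G x)) a b.
Proof.
  intros H. symmetry. apply (is_RInt_unique (V:=R_CompleteNormedModule)).
  apply (is_RInt_fct_extend_fst (U:=R_NormedModule) (V:=R_NormedModule)).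
  apply (RInt_correct (V:=C_R_CompleteNormedModule)). exact H.
Qed.
Lemma RInt_C_snd (G : R -> C) a b : ex_RInt (V:=C_R_NormedModule) G a b ->
  snd (RInt (V:=C_R_CompleteNormedModule) G a b) = RInt (fun x => snd (G x)) a b.
Proof.
  intros H. symmetry. apply (is_RInt_unique (V:=R_CompleteNormedModule)).
  apply (is_RInt_fct_extend_snd (U:=R_NormedModule) (V:=R_NormedModule)).
  apply (RInt_correct (V:=C_R_CompleteNormedModule)). exact H.
Qed.

Lemma RInt_C_bound (G : R -> C) a b M : a <= b -> ex_RInt (V:=C_R_NormedModule) G a b ->
  (forall x, a <= x <= b -> Cmod (G x) <= M) ->
  Cmod (RInt (V:=C_R_CompleteNormedModule) G a b) <= (b - a) * M.
Proof.
  intros hab HG HM. rewrite <- normC.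
  apply (norm_RInt_le_const (V:=C_R_NormedModule) G); auto.
  intros x Hx. rewrite normC. auto.
  apply (RInt_correct (V:=C_R_CompleteNormedModule)). exact HG.
Qed.

Definition Fi (w : R -> C) a y := RInt (V:=C_R_CompleteNormedModule) (KK a w) y 1.
Definition Pf a y := Cmult (Cexpi (phi y a)) (RtoC (/(1-y))).
Definition psit w y a := Cmult (Pf a y) (Fi w a y).

Lemma Cmod_Pf a y : y < 1 -> Cmod (Pf a y) = / (1 - y).
Proof.
  intros hy. unfold Pf. rewrite Cmod_mult, Cmod_Cexpi, Cmod_R, Rabs_right. ring.
  apply Rle_ge, Rlt_le, Rinv_0_lt_compat. lra.
Qed.

Lemma Ccont_const (c : C) : Ccont (fun _ => c).
Proof. intros x. split; apply continuous_const. Qed.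

Lemma Ccont_minus (w : R -> C) c : Ccont w -> Ccont (fun x => Cminus (w x) c).
Proof.
  intros H x. destruct (H x) as [H1 H2]. simpl. split.
  - apply (continuous_minus (V:=R_NormedModule)) with (g := fun _ => fst c); auto. apply continuous_const.
  - apply (continuous_minus (V:=R_NormedModule)) with (g := fun _ => snd c); auto. apply continuous_const.
Qed.

Lemma inv_bound a a0 : a0 <> 0 -> Rabs (a - a0) < Rabs a0 / 2 -> a <> 0 /\ / Rabs a <= 2 / Rabs a0.
Proof.
  intros h0 h. pose proof (Rabs_pos_lt a0 h0).
  assert (Rabs a0 / 2 <= Rabs a).
  { pose proof (Rabs_triang_inv a0 a). rewrite <- Rabs_Ropp in h. replace (- (a - a0)) with (a0 - a) in h by ring. lra. }
  split. intro; subst. rewrite Rabs_R0 in H0. lra.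
  replace (2 / Rabs a0) with (/ (Rabs a0 / 2)) by (field; lra).
  apply Rinv_le_contravar; lra.
Qed.

Lemma Fconst_bound p q a Q y : a <> 0 -> / Rabs a <= Q -> 0 <= y < 1 ->
  Cmod (RInt (V:=C_R_CompleteNormedModule) (KK a (fun _ => (p,q))) y 1) <= 2 * ((Rabs p + Rabs q) * (1-y)^2 * KQ Q).
Proof.
  intros ha hQ hy.
  assert (HE : ex_RInt (V:=C_R_NormedModule) (KK a (fun _ => (p,q))) y 1).
  { apply KK_ex1 with (Cmod (p,q)). apply Ccont_const. intros; lra. lra. }
  eapply Rle_trans; [apply Cmod_le_sum|].
  rewrite RInt_C_fst, RInt_C_snd by exact HE.
  rewrite (RInt_ext (V:=R_CompleteNormedModule) (fun x => fst (KK a (fun _ => (p,q)) x)) (wf p q a)).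
  2:{ intros x _. unfold KK, wf, Cexpi. simpl. rewrite cos_neg, sin_neg. ring. }
  rewrite (RInt_ext (V:=R_CompleteNormedModule) (fun x => snd (KK a (fun _ => (p,q)) x)) (wf q (-p) a)).
  2:{ intros x _. unfold KK, wf, Cexpi. simpl. rewrite cos_neg, sin_neg. ring. }
  pose proof (OSC_1 p q a Q y ha hQ hy). pose proof (OSC_1 q (-p) a Q y ha hQ hy).
  rewrite Rabs_Ropp in H0. lra.
Qed.

Lemma NEAR1 (w : R -> C) M a0 : Ccont w -> (forall x, Cmod (w x) <= M) -> a0 <> 0 ->
  forall eps, 0 < eps -> exists d, 0 < d /\ forall y a, 0 <= y < 1 -> 1 - y < d -> Rabs (a - a0) < d ->
    Cmod (psit w y a) < eps.
Proof.
  intros Hw HM h0 eps he.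
  destruct (w 1) as [p q] eqn:Ew.
  set (S := Rabs p + Rabs q).
  set (Q := 2 / Rabs a0).
  assert (HS : 0 <= S) by (unfold S; pose proof (Rabs_pos p); pose proof (Rabs_pos q); lra).
  assert (HQ : 0 <= Q) by (unfold Q; pose proof (Rabs_pos_lt a0 h0); apply Rlt_le, Rdiv_lt_0_compat; lra).
  assert (HK : 0 <= KQ Q) by (unfold KQ; pose proof (pow2_ge_0 Q); lra).
  destruct (contC_eps w 1 Hw (eps/2) ltac:(lra)) as [d1 [hd1 Hd1]].
  rewrite Ew in Hd1.
  set (d := Rmin d1 (Rmin (Rabs a0 / 2) (eps / (4 * (S * KQ Q + 1))))).
  assert (hd : 0 < d).
  { unfold d. pose proof (Rabs_pos_lt a0 h0). repeat apply Rmin_glb_lt; try lra.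
    apply Rdiv_lt_0_compat; try lra. assert (0 <= S * KQ Q) by nra. lra. }
  exists d. split; auto. intros y a hy hyd had.
  assert (hd1' : d <= d1) by apply Rmin_l.
  assert (hd2 : d <= Rabs a0 / 2) by (eapply Rle_trans; [apply Rmin_r|apply Rmin_l]).
  assert (hd3 : d <= eps / (4 * (S * KQ Q + 1))) by (eapply Rle_trans; [apply Rmin_r|apply Rmin_r]).
  destruct (inv_bound a a0 h0 ltac:(lra)) as [ha hQ]. fold Q in hQ.
  set (wd := fun x => Cminus (w x) (p,q)).
  assert (Hsplit : Fi w a y = Cplus (RInt (V:=C_R_CompleteNormedModule) (KK a (fun _ => (p,q))) y 1)
                                 (RInt (V:=C_R_CompleteNormedModule) (KK a wd) y 1)).
  { unfold Fi. rewrite <- (RInt_plus (V:=C_R_CompleteNormedModule)).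
    - apply RInt_ext. intros x _. unfold KK, wd, Cminus, Cplus, Cmult, Copp. simpl.
      destruct (w x) as [u v]. simpl. unfold plus; simpl. unfold prod_plus, plus; simpl. f_equal; ring.
    - apply KK_ex1 with (Cmod (p,q)). apply Ccont_const. intros; lra. lra.
    - apply KK_ex1 with (M + Cmod (p,q)). apply Ccont_minus; auto.
      intros x. unfold wd, Cminus. eapply Rle_trans; [apply Cmod_triangle|]. rewrite Cmod_opp.
      pose proof (HM x). lra. lra. }
  assert (H1 : Cmod (RInt (V:=C_R_CompleteNormedModule) (KK a wd) y 1) <= (1 - y) * (eps/2)).
  { apply RInt_C_bound. lra.
    apply KK_ex1 with (M + Cmod (p,q)). apply Ccont_minus; auto.
    intros x. unfold wd, Cminus. eapply Rle_trans; [apply Cmod_triangle|]. rewrite Cmod_opp.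
    pose proof (HM x). lra. lra.
    intros x Hx. rewrite Cmod_KK. unfold wd. apply Rlt_le, Hd1.
    rewrite Rabs_left1 by lra. lra. }
  pose proof (Fconst_bound p q a Q y ha hQ hy) as H2. fold S in H2.
  unfold psit. rewrite Cmod_mult, Cmod_Pf by lra. rewrite Hsplit.
  assert (HT : 0 < 1 - y) by lra.
  assert (HF : Cmod (Fi w a y) <= 2 * (S * (1 - y) ^ 2 * KQ Q) + (1 - y) * (eps / 2)).
  { rewrite Hsplit. eapply Rle_trans; [apply Cmod_triangle|]. lra. }
  rewrite <- Hsplit.
  apply Rle_lt_trans with (/ (1 - y) * (2 * (S * (1 - y) ^ 2 * KQ Q) + (1 - y) * (eps / 2))).
  { apply Rmult_le_compat_l; auto. apply Rlt_le, Rinv_0_lt_compat; lra. }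
  replace (/ (1 - y) * (2 * (S * (1 - y) ^ 2 * KQ Q) + (1 - y) * (eps / 2)))
    with (2 * S * KQ Q * (1 - y) + eps / 2) by (field; lra).
  assert (1 - y < eps / (4 * (S * KQ Q + 1))) by lra.
  assert (Hp : 0 <= S * KQ Q) by nra.
  assert ((1 - y) * (4 * (S * KQ Q + 1)) < eps).
  { apply Rmult_lt_compat_r with (r := 4 * (S * KQ Q + 1)) in H; [|lra].
    replace (eps / (4 * (S * KQ Q + 1)) * (4 * (S * KQ Q + 1))) with eps in H by (field; lra). lra. }
  nra.
Qed.

Definition LL c Q := 2/(1-c)^2 + 2*Q^2*(- ln (1-c)).

Lemma LL_pos c Q : 0 <= c < 1 -> 0 <= LL c Q.
Proof.
  intros hc. unfold LL.
  assert (ln (1-c) <= 0) by (rewrite <- ln_1; apply ln_le; lra).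
  assert (0 < (1-c)^2) by (apply pow_lt; lra).
  assert (0 <= 2 / (1-c)^2) by (apply Rlt_le, Rdiv_lt_0_compat; lra).
  assert (0 <= Q^2) by apply pow2_ge_0. nra.
Qed.

Lemma PHI_LIP a a0 Q x c : a <> 0 -> a0 <> 0 -> / Rabs a <= Q -> / Rabs a0 <= Q -> 0 <= x <= c -> c < 1 ->
  Rabs (phi x a - phi x a0) <= Rabs (a - a0) * LL c Q.
Proof.
  intros ha ha0 hQ hQ0 hx hc. unfold phi, LL.
  set (t := 1 - x). assert (ht : 1 - c <= t <= 1) by (unfold t; lra).
  clearbody t.
  replace (- (2 * a) / t ^ 2 + 2 * a / t - 2 / a * ln t - (- (2 * a0) / t ^ 2 + 2 * a0 / t - 2 / a0 * ln t))
    with ((a - a0) * (2 * (t - 1) / t^2) + (a - a0) * (2 / (a * a0)) * ln t) by (field; repeat split; auto; lra).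
  eapply Rle_trans; [apply Rabs_triang|]. rewrite !Rabs_mult.
  assert (H1 : Rabs (2 * (t - 1) / t ^ 2) <= 2 / (1 - c) ^ 2).
  { rewrite Rabs_div by (apply pow_nonzero; lra). rewrite Rabs_mult, (Rabs_right 2) by lra.
    rewrite (Rabs_left1 (t-1)) by lra. rewrite <- RPow_abs, (Rabs_right t) by lra.
    assert (0 < (1-c)^2) by (apply pow_lt; lra).
    assert ((1-c)^2 <= t^2) by (apply pow_incr; lra).
    unfold Rdiv. apply Rmult_le_compat; try lra.
    apply Rlt_le, Rinv_0_lt_compat. apply pow_lt; lra.
    apply Rinv_le_contravar; lra. }
  assert (H2 : Rabs (2 / (a * a0)) <= 2 * Q^2).
  { rewrite Rabs_div by (apply Rmult_integral_contrapositive_currified; auto).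
    rewrite Rabs_mult, (Rabs_right 2) by lra. unfold Rdiv. rewrite Rinv_mult.
    pose proof (Rinv_0_lt_compat _ (Rabs_pos_lt a ha)). pose proof (Rinv_0_lt_compat _ (Rabs_pos_lt a0 ha0)).
    simpl. rewrite Rmult_1_r. apply Rmult_le_compat_l; try lra. apply Rmult_le_compat; lra. }
  assert (H3 : Rabs (ln t) <= - ln (1 - c)).
  { rewrite Rabs_left1. apply Ropp_le_contravar. apply ln_le; lra.
    rewrite <- ln_1. apply ln_le; lra. }
  pose proof (Rabs_pos (a - a0)). pose proof (Rabs_pos (ln t)). pose proof (Rabs_pos (2 / (a * a0))).
  pose proof (Rabs_pos (2 * (t - 1) / t ^ 2)).
  assert (Rabs (2 / (a * a0)) * Rabs (ln t) <= 2 * Q ^ 2 * - ln (1 - c)) by (apply Rmult_le_compat; auto).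
  nra.
Qed.

Lemma RInt_C_bound2 (G : R -> C) u v M : ex_RInt (V:=C_R_NormedModule) G (Rmin u v) (Rmax u v) ->
  (forall x, Rmin u v <= x <= Rmax u v -> Cmod (G x) <= M) ->
  Cmod (RInt (V:=C_R_CompleteNormedModule) G u v) <= Rabs (u - v) * M.
Proof.
  intros HE HM. destruct (Rle_dec u v).
  - rewrite Rmin_left, Rmax_right in * by lra.
    rewrite Rabs_left1 by lra. replace (- (u - v)) with (v - u) by ring.
    apply RInt_C_bound; auto.
  - rewrite Rmin_right, Rmax_left in * by lra.
    rewrite <- (opp_RInt_swap (V:=C_R_CompleteNormedModule)) by exact HE.
    change (Cmod (Copp (RInt (V:=C_R_CompleteNormedModule) G v u)) <= Rabs (u - v) * M).
    rewrite Cmod_opp. rewrite Rabs_right by lra. apply RInt_C_bound; auto. lra.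
Qed.

Lemma FD_y (w : R -> C) M a u v : Ccont w -> (forall x, Cmod (w x) <= M) -> u < 1 -> v < 1 ->
  Cmod (Cminus (Fi w a u) (Fi w a v)) <= M * Rabs (u - v).
Proof.
  intros Hw HM hu hv. unfold Fi.
  assert (E1 : ex_RInt (V:=C_R_NormedModule) (KK a w) u v).
  { destruct (Rle_dec u v). apply KK_ex; auto; lra.
    apply (ex_RInt_swap (V:=C_R_NormedModule)). apply KK_ex; auto; lra. }
  rewrite <- (RInt_Chasles (V:=C_R_CompleteNormedModule) _ u v 1); auto.
  2:{ apply KK_ex1 with M; auto. }
  set (X := RInt (V:=C_R_CompleteNormedModule) (KK a w) u v).
  set (Y := RInt (V:=C_R_CompleteNormedModule) (KK a w) v 1).
  replace (Cminus (plus X Y) Y) with X.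
  2:{ destruct X, Y. unfold Cminus, Cplus, Copp, plus. simpl. unfold prod_plus, plus. simpl. f_equal; ring. }
  unfold X. rewrite Rmult_comm. apply RInt_C_bound2.
  - unfold Rmin, Rmax. destruct Rle_dec; auto. apply (ex_RInt_swap (V:=C_R_NormedModule)). auto.
  - intros x _. rewrite Cmod_KK. auto.
Qed.

Lemma KK_diff a a0 (w : R -> C) x :
  Cminus (KK a w x) (KK a0 w x) = Cmult (Cminus (Cexpi (- phi x a)) (Cexpi (- phi x a0))) (w x).
Proof.
  unfold KK, Cexpi, Cminus, Cplus, Copp, Cmult. destruct (w x). simpl. f_equal; ring.
Qed.

Lemma FD_a (w : R -> C) M y0 a0 : Ccont w -> (forall x, Cmod (w x) <= M) -> 0 <= y0 < 1 -> a0 <> 0 ->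
  forall e, 0 < e -> exists d, 0 < d /\ forall a, Rabs (a - a0) < d ->
    Cmod (Cminus (Fi w a y0) (Fi w a0 y0)) < e.
Proof.
  intros Hw HM hy0 h0 e he.
  assert (HM0 : 0 <= M) by (pose proof (HM 0); pose proof (Cmod_ge_0 (w 0)); lra).
  set (Q := 2 / Rabs a0).
  pose proof (Rabs_pos_lt a0 h0) as Ha0.
  assert (hQ0 : / Rabs a0 <= Q).
  { unfold Q. unfold Rdiv. pose proof (Rinv_0_lt_compat _ Ha0). lra. }
  set (d := Rmin ((1-y0)/2) (e / (4 * (M+1)))).
  assert (hd : 0 < d) by (apply Rmin_glb_lt; [lra|apply Rdiv_lt_0_compat; lra]).
  assert (hd1 : d <= (1-y0)/2) by apply Rmin_l.
  assert (hd2 : d <= e / (4 * (M+1))) by apply Rmin_r.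
  set (c := 1 - d).
  assert (hc : y0 <= c < 1) by (unfold c; lra).
  set (L := LL c Q).
  assert (hL : 0 <= L) by (apply LL_pos; lra).
  set (del := Rmin (Rabs a0 / 2) (e / (4 * (2 * M * L + 1)))).
  assert (hdel : 0 < del).
  { apply Rmin_glb_lt; [lra|]. apply Rdiv_lt_0_compat; [lra|]. assert (0 <= 2*M*L) by nra. lra. }
  exists del. split; auto. intros a ha.
  assert (hdel1 : del <= Rabs a0 / 2) by apply Rmin_l.
  assert (hdel2 : del <= e / (4 * (2 * M * L + 1))) by apply Rmin_r.
  destruct (inv_bound a a0 h0 ltac:(lra)) as [ha0 hQ]. fold Q in hQ.
  assert (Ex : forall b, b <> 0 -> ex_RInt (V:=C_R_NormedModule) (KK b w) y0 c) by (intros; apply KK_ex; auto; lra).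
  assert (Ex1 : forall b, b <> 0 -> ex_RInt (V:=C_R_NormedModule) (KK b w) c 1) by (intros; apply KK_ex1 with M; auto; lra).
  unfold Fi.
  rewrite <- (RInt_Chasles (V:=C_R_CompleteNormedModule) (KK a w) y0 c 1) by auto.
  rewrite <- (RInt_Chasles (V:=C_R_CompleteNormedModule) (KK a0 w) y0 c 1) by auto.
  set (A1 := RInt (V:=C_R_CompleteNormedModule) (KK a w) y0 c).
  set (B1 := RInt (V:=C_R_CompleteNormedModule) (KK a w) c 1).
  set (A0 := RInt (V:=C_R_CompleteNormedModule) (KK a0 w) y0 c).
  set (B0 := RInt (V:=C_R_CompleteNormedModule) (KK a0 w) c 1).
  assert (HB1 : Cmod B1 <= (1 - c) * M).
  { apply RInt_C_bound; auto. lra. intros x _. rewrite Cmod_KK. auto. }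
  assert (HB0 : Cmod B0 <= (1 - c) * M).
  { apply RInt_C_bound; auto. lra. intros x _. rewrite Cmod_KK. auto. }
  assert (HA : Cmod (Cminus A1 A0) <= (c - y0) * (2 * M * L * Rabs (a - a0))).
  { assert (E : Cminus A1 A0 = RInt (V:=C_R_CompleteNormedModule) (fun x => minus (KK a w x) (KK a0 w x)) y0 c).
    { symmetry. etransitivity; [apply (RInt_minus (V:=C_R_CompleteNormedModule)); auto|]. reflexivity. }
    rewrite E. apply RInt_C_bound. lra.
    apply (ex_RInt_minus (V:=C_R_NormedModule)); auto.
    intros x Hx. change (Cmod (Cminus (KK a w x) (KK a0 w x)) <= 2 * M * L * Rabs (a - a0)).
    rewrite KK_diff, Cmod_mult.
    pose proof (Cexpi_lip (- phi x a) (- phi x a0)) as H1.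
    replace (- phi x a - - phi x a0) with (phi x a0 - phi x a) in H1 by ring. rewrite Rabs_minus_sym in H1.
    pose proof (PHI_LIP a a0 Q x c ha0 h0 hQ hQ0 ltac:(lra) ltac:(lra)) as H2. fold L in H2.
    pose proof (HM x). pose proof (Cmod_ge_0 (w x)).
    pose proof (Cmod_ge_0 (Cminus (Cexpi (- phi x a)) (Cexpi (- phi x a0)))).
    pose proof (Rabs_pos (a - a0)).
    assert (Cmod (Cminus (Cexpi (- phi x a)) (Cexpi (- phi x a0))) <= 2 * (Rabs (a - a0) * L)) by lra.
    assert (Cmod (Cminus (Cexpi (- phi x a)) (Cexpi (- phi x a0))) * Cmod (w x) <= (2 * (Rabs (a - a0) * L)) * M)
      by (apply Rmult_le_compat; auto).
    lra. }
  replace (Cminus (plus A1 B1) (plus A0 B0)) with (Cplus (Cminus A1 A0) (Cminus B1 B0)).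
  2:{ destruct A1, B1, A0, B0. unfold Cminus, Cplus, Copp, plus. simpl. unfold prod_plus, plus. simpl. f_equal; ring. }
  eapply Rle_lt_trans; [apply Cmod_triangle|].
  assert (Cmod (Cminus B1 B0) <= 2 * ((1 - c) * M)).
  { unfold Cminus. eapply Rle_trans; [apply Cmod_triangle|]. rewrite Cmod_opp. lra. }
  assert (1 - c = d) by (unfold c; ring).
  assert (d * M < e / 4).
  { assert (d * (M + 1) <= e / 4).
    { apply Rmult_le_compat_r with (r := M+1) in hd2; [|lra].
      replace (e / (4 * (M + 1)) * (M + 1)) with (e/4) in hd2 by (field; lra). lra. }
    nra. }
  assert (2 * M * L * del <= e / 4).
  { apply Rmult_le_compat_l with (r := 2*M*L + 1) in hdel2; [|nra].
    replace ((2 * M * L + 1) * (e / (4 * (2 * M * L + 1)))) with (e/4) in hdel2 by (field; nra). nra. }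
  assert ((c - y0) * (2 * M * L * Rabs (a - a0)) <= 2 * M * L * del).
  { assert (0 <= 2*M*L) by nra. assert (c - y0 <= 1) by lra. pose proof (Rabs_pos (a - a0)).
    assert (2 * M * L * Rabs (a - a0) <= 2 * M * L * del) by (apply Rmult_le_compat_l; lra).
    assert (0 <= 2 * M * L * Rabs (a - a0)) by (apply Rmult_le_pos; lra).
    assert ((c - y0) * (2 * M * L * Rabs (a - a0)) <= 1 * (2 * M * L * Rabs (a - a0))) by (apply Rmult_le_compat_r; lra).
    lra. }
  rewrite H0 in H. lra.
Qed.

Lemma PHI_cont2 y0 a0 : 0 <= y0 < 1 -> a0 <> 0 -> forall e, 0 < e ->
  exists d, 0 < d /\ forall y a, 0 <= y -> Rabs (y - y0) < d -> Rabs (a - a0) < d ->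
    Rabs (phi y a - phi y0 a0) < e.
Proof.
  intros hy0 h0 e he.
  set (c := (1 + y0)/2). set (Q := 2 / Rabs a0).
  pose proof (Rabs_pos_lt a0 h0) as Ha0.
  assert (hQ0 : / Rabs a0 <= Q).
  { unfold Q. unfold Rdiv. pose proof (Rinv_0_lt_compat _ Ha0). lra. }
  set (L := LL c Q). assert (hL : 0 <= L) by (apply LL_pos; unfold c; lra).
  destruct (cont_eps _ _ (phi_cont a0 y0 ltac:(lra)) (e/2) ltac:(lra)) as [d1 [hd1 Hd1]].
  set (d := Rmin d1 (Rmin ((1-y0)/2) (Rmin (Rabs a0 / 2) (e / (2 * (L + 1)))))).
  assert (hd : 0 < d).
  { unfold d. repeat apply Rmin_glb_lt; try lra. apply Rdiv_lt_0_compat; lra. }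
  exists d. split; auto. intros y a hy hyd had.
  assert (h1 : d <= d1) by apply Rmin_l.
  assert (h2 : d <= (1-y0)/2) by (eapply Rle_trans; [apply Rmin_r|apply Rmin_l]).
  assert (h3 : d <= Rabs a0 / 2) by (eapply Rle_trans; [apply Rmin_r|]; eapply Rle_trans; [apply Rmin_r|apply Rmin_l]).
  assert (h4 : d <= e / (2 * (L + 1))) by (eapply Rle_trans; [apply Rmin_r|]; eapply Rle_trans; [apply Rmin_r|apply Rmin_r]).
  destruct (inv_bound a a0 h0 ltac:(lra)) as [ha hQ]. fold Q in hQ.
  assert (hyc : 0 <= y <= c).
  { split; auto. unfold c. apply Rabs_def2 in hyd. lra. }
  pose proof (PHI_LIP a a0 Q y c ha h0 hQ hQ0 hyc ltac:(unfold c; lra)) as HL. fold L in HL.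
  pose proof (Hd1 y ltac:(lra)) as H2.
  replace (phi y a - phi y0 a0) with ((phi y a - phi y a0) + (phi y a0 - phi y0 a0)) by ring.
  eapply Rle_lt_trans; [apply Rabs_triang|].
  assert (Rabs (a - a0) * L <= d * L) by (apply Rmult_le_compat_r; lra).
  assert (d * (L + 1) <= e / 2).
  { apply Rmult_le_compat_r with (r := L+1) in h4; [|lra].
    replace (e / (2 * (L + 1)) * (L + 1)) with (e/2) in h4 by (field; lra). lra. }
  nra.
Qed.

Lemma Cminus_R u v : Cmod (Cminus (RtoC u) (RtoC v)) = Rabs (u - v).
Proof.
  replace (Cminus (RtoC u) (RtoC v)) with (RtoC (u - v)). apply Cmod_R.
  unfold Cminus, Cplus, Copp, RtoC. simpl. f_equal; ring.
Qed.

Lemma Pf_cont y0 a0 : 0 <= y0 < 1 -> a0 <> 0 -> forall e, 0 < e ->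
  exists d, 0 < d /\ forall y a, 0 <= y -> Rabs (y - y0) < d -> Rabs (a - a0) < d ->
    Cmod (Cminus (Pf a y) (Pf a0 y0)) < e.
Proof.
  intros hy0 h0 e he.
  assert (Hr : continuous (fun y => / (1 - y)) y0).
  { apply (ex_derive_continuous (K:=R_AbsRing) (V:=R_NormedModule)). auto_derive. lra. }
  destruct (cont_eps _ _ Hr (e/2) ltac:(lra)) as [d1 [hd1 Hd1]].
  destruct (PHI_cont2 y0 a0 hy0 h0 (e * (1 - y0) / 8)) as [d2 [hd2 Hd2]].
  { apply Rdiv_lt_0_compat; [|lra]. apply Rmult_lt_0_compat; lra. }
  set (d := Rmin d1 (Rmin d2 ((1-y0)/2))).
  assert (hd : 0 < d) by (unfold d; repeat apply Rmin_glb_lt; lra).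
  exists d. split; auto. intros y a hy hyd had.
  assert (h1 : d <= d1) by apply Rmin_l.
  assert (h2 : d <= d2) by (eapply Rle_trans; [apply Rmin_r|apply Rmin_l]).
  assert (h3 : d <= (1-y0)/2) by (eapply Rle_trans; [apply Rmin_r|apply Rmin_r]).
  assert (hyy : 1 - y >= (1 - y0) / 2) by (apply Rabs_def2 in hyd; lra).
  unfold Pf.
  replace (Cminus (Cmult (Cexpi (phi y a)) (RtoC (/ (1 - y)))) (Cmult (Cexpi (phi y0 a0)) (RtoC (/ (1 - y0)))))
    with (Cplus (Cmult (Cminus (Cexpi (phi y a)) (Cexpi (phi y0 a0))) (RtoC (/ (1 - y))))
                (Cmult (Cexpi (phi y0 a0)) (Cminus (RtoC (/ (1 - y))) (RtoC (/ (1 - y0)))))).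
  2:{ unfold Cminus, Cplus, Copp, Cmult, RtoC, Cexpi. simpl. f_equal; ring. }
  eapply Rle_lt_trans; [apply Cmod_triangle|].
  rewrite !Cmod_mult, Cmod_Cexpi, Cmod_R, Cminus_R.
  pose proof (Hd1 y ltac:(lra)) as Hr1.
  pose proof (Hd2 y a hy ltac:(lra) ltac:(lra)) as Hp.
  pose proof (Cexpi_lip (phi y a) (phi y0 a0)) as HE.
  assert (Hry : 0 < / (1 - y) <= 2 / (1 - y0)).
  { split. apply Rinv_0_lt_compat; lra.
    replace (2 / (1 - y0)) with (/ ((1 - y0)/2)) by (field; lra).
    apply Rinv_le_contravar; lra. }
  rewrite (Rabs_right (/ (1 - y))) by lra.
  assert (Cmod (Cminus (Cexpi (phi y a)) (Cexpi (phi y0 a0))) * / (1 - y) <= (2 * (e * (1 - y0) / 8)) * (2 / (1 - y0))).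
  { apply Rmult_le_compat; try lra. apply Cmod_ge_0. }
  replace (2 * (e * (1 - y0) / 8) * (2 / (1 - y0))) with (e / 2) in H by (field; lra).
  lra.
Qed.

Lemma CONT (w : R -> C) M y0 a0 : Ccont w -> (forall x, Cmod (w x) <= M) -> 0 <= y0 < 1 -> a0 <> 0 ->
  forall eps, 0 < eps -> exists d, 0 < d /\ forall y a, 0 <= y -> Rabs (y - y0) < d -> Rabs (a - a0) < d ->
    y < 1 /\ Cmod (Cminus (psit w y a) (psit w y0 a0)) < eps.
Proof.
  intros Hw HM hy0 h0 eps he.
  assert (HM0 : 0 <= M) by (pose proof (HM 0); pose proof (Cmod_ge_0 (w 0)); lra).
  set (F0 := Fi w a0 y0). set (P0 := Pf a0 y0).
  set (e3 := eps * (1 - y0) / 4).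
  assert (he3 : 0 < e3) by (unfold e3; apply Rdiv_lt_0_compat; [apply Rmult_lt_0_compat|]; lra).
  destruct (FD_a w M y0 a0 Hw HM hy0 h0 (e3/2) ltac:(lra)) as [d1 [hd1 Hd1]].
  assert (hF0 : 0 <= Cmod F0) by apply Cmod_ge_0.
  destruct (Pf_cont y0 a0 hy0 h0 (eps / (2 * (Cmod F0 + 1)))) as [d2 [hd2 Hd2]].
  { apply Rdiv_lt_0_compat; lra. }
  set (d := Rmin d1 (Rmin d2 (Rmin ((1-y0)/2) (e3 / (2 * (M + 1)))))).
  assert (hd : 0 < d).
  { unfold d. repeat apply Rmin_glb_lt; try lra. apply Rdiv_lt_0_compat; lra. }
  exists d. split; auto. intros y a hy hyd had.
  assert (h1 : d <= d1) by apply Rmin_l.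
  assert (h2 : d <= d2) by (eapply Rle_trans; [apply Rmin_r|apply Rmin_l]).
  assert (h3 : d <= (1-y0)/2) by (eapply Rle_trans; [apply Rmin_r|]; eapply Rle_trans; [apply Rmin_r|apply Rmin_l]).
  assert (h4 : d <= e3 / (2 * (M + 1))) by (eapply Rle_trans; [apply Rmin_r|]; eapply Rle_trans; [apply Rmin_r|apply Rmin_r]).
  assert (hyy : 1 - y >= (1 - y0) / 2) by (apply Rabs_def2 in hyd; lra).
  split. lra.
  unfold psit. fold P0 F0.
  set (P := Pf a y). set (F := Fi w a y).
  replace (Cminus (Cmult P F) (Cmult P0 F0)) with (Cplus (Cmult P (Cminus F F0)) (Cmult (Cminus P P0) F0)).
  2:{ destruct P, F, P0, F0. unfold Cminus, Cplus, Copp, Cmult. simpl. f_equal; ring. }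
  eapply Rle_lt_trans; [apply Cmod_triangle|]. rewrite !Cmod_mult.
  assert (HP : Cmod P <= 2 / (1 - y0)).
  { unfold P. rewrite Cmod_Pf by lra.
    replace (2 / (1 - y0)) with (/ ((1 - y0)/2)) by (field; lra).
    apply Rinv_le_contravar; lra. }
  assert (HFF : Cmod (Cminus F F0) < e3).
  { replace (Cminus F F0) with (Cplus (Cminus F (Fi w a y0)) (Cminus (Fi w a y0) F0)).
    2:{ destruct F, F0, (Fi w a y0). unfold Cminus, Cplus, Copp. simpl. f_equal; ring. }
    eapply Rle_lt_trans; [apply Cmod_triangle|].
    pose proof (FD_y w M a y y0 Hw HM ltac:(lra) ltac:(lra)) as H1.
    pose proof (Hd1 a ltac:(lra)) as H2.
    assert (M * Rabs (y - y0) <= M * d) by (apply Rmult_le_compat_l; lra).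
    assert (M * d < e3 / 2).
    { apply Rmult_le_compat_r with (r := M+1) in h4; [|lra].
      replace (e3 / (2 * (M + 1)) * (M + 1)) with (e3/2) in h4 by (field; lra). nra. }
    unfold F, F0 in *. lra. }
  pose proof (Hd2 y a hy ltac:(lra) ltac:(lra)) as HPP. fold P P0 in HPP.
  assert (Cmod P * Cmod (Cminus F F0) <= 2 / (1 - y0) * e3).
  { apply Rmult_le_compat; try apply Cmod_ge_0; lra. }
  replace (2 / (1 - y0) * e3) with (eps / 2) in H by (unfold e3; field; lra).
  assert (Cmod (Cminus P P0) * Cmod F0 <= eps / (2 * (Cmod F0 + 1)) * Cmod F0).
  { apply Rmult_le_compat_r; lra. }
  assert (eps / (2 * (Cmod F0 + 1)) * Cmod F0 < eps / 2).
  { replace (eps / (2 * (Cmod F0 + 1)) * Cmod F0) with (eps / 2 * (Cmod F0 / (Cmod F0 + 1))) by (field; lra).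
    assert (Cmod F0 / (Cmod F0 + 1) < 1).
    { apply (Rmult_lt_reg_r (Cmod F0 + 1)); [lra|]. unfold Rdiv. rewrite Rmult_assoc, Rinv_l by lra. lra. }
    nra. }
  lra.
Qed.

Lemma Cminus_0 (z : C) : Cminus z (RtoC 0) = z.
Proof. destruct z. unfold Cminus, Cplus, Copp, RtoC. simpl. f_equal; ring. Qed.

Theorem lemma3p34 (J : R -> Prop) (f : R -> C) :
  compact J ->
  (forall a, J a -> a <> 0) ->
  (* f is continuous on [0,1] (as a function on the subspace [0,1]) *)
  (forall x, 0 <= x <= 1 ->
     filterlim f (within (fun t => 0 <= t <= 1) (locally x)) (locally (f x))) ->
  exists g : R -> R -> C,
    (forall y a, 0 <= y < 1 -> J a -> g y a = psi f y a) /\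
    (* g is continuous on [0,1] x J (subspace topology) *)
    (forall y a, 0 <= y <= 1 -> J a ->
       forall eps : R, 0 < eps -> exists delta : R, 0 < delta /\
         forall y' a', 0 <= y' <= 1 -> J a' ->
           Rabs (y' - y) < delta -> Rabs (a' - a) < delta ->
           Cmod (Cminus (g y' a') (g y a)) < eps).
Proof.
  intros _ Hnz Hf.
  set (ft := fun x => f (clamp x)).
  assert (Hc : Ccont ft).
  { intros x. pose proof (ft_cont f Hf x) as H. split; [apply cont_fst|apply cont_snd]; exact H. }
  assert (HB : exists M, forall x, Cmod (ft x) <= M).
  { destruct (Hc 0) as [_ _].
    assert (E1 : ex_RInt (fun t => fst (ft t)) 0 1).
    { apply (ex_RInt_continuous (V:=R_CompleteNormedModule)). intros z _. apply (Hc z). }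
    assert (E2 : ex_RInt (fun t => snd (ft t)) 0 1).
    { apply (ex_RInt_continuous (V:=R_CompleteNormedModule)). intros z _. apply (Hc z). }
    destruct (ex_RInt_ub _ _ _ E1) as [M1 HM1].
    destruct (ex_RInt_ub _ _ _ E2) as [M2 HM2].
    exists (M1 + M2). intros x.
    assert (Ex : ft x = ft (clamp x)) by (unfold ft; rewrite (clamp_id (clamp x)) by apply clamp_in; reflexivity).
    rewrite Ex. eapply Rle_trans; [apply Cmod_le_sum|].
    pose proof (clamp_in x).
    rewrite Rmin_left, Rmax_right in HM1, HM2 by lra.
    pose proof (HM1 (clamp x) H). pose proof (HM2 (clamp x) H).
    change (norm (fst (ft (clamp x)))) with (Rabs (fst (ft (clamp x)))) in H0.
    change (norm (snd (ft (clamp x)))) with (Rabs (snd (ft (clamp x)))) in H1.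
    lra. }
  destruct HB as [M HM].
  exists (fun y a => if Rlt_dec y 1 then psit ft y a else RtoC 0).
  split.
  - intros y a hy Ja. destruct (Rlt_dec y 1) as [_|]; [|lra].
    unfold psit, psi, Pf, Fi. f_equal.
    apply (RInt_ext (V:=C_R_CompleteNormedModule)). intros x Hx.
    rewrite Rmin_left, Rmax_right in Hx by lra.
    unfold KK, ft. rewrite clamp_id by lra. reflexivity.
  - intros y a hy Ja eps he.
    pose proof (Hnz a Ja) as ha.
    destruct (Rlt_dec y 1) as [hy1|hy1].
    + destruct (CONT ft M y a Hc HM ltac:(lra) ha eps he) as [d [hd Hd]].
      exists d. split; auto. intros y' a' hy' Ja' H1 H2.
      destruct (Hd y' a' (proj1 hy') H1 H2) as [hy'1 HC].
      destruct (Rlt_dec y' 1); [|lra]. exact HC.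
    + assert (y = 1) by lra. subst y.
      destruct (NEAR1 ft M a Hc HM ha eps he) as [d [hd Hd]].
      exists d. split; auto. intros y' a' hy' Ja' H1 H2.
      destruct (Rlt_dec y' 1) as [hy'1|hy'1].
      * rewrite Cminus_0. apply Hd; auto. lra.
        rewrite Rabs_left1 in H1 by lra. lra.
      * rewrite Cminus_0. rewrite Cmod_0. lra.
Qed.
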